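(* Let $n\geq 4$ and let $3\leq i\leq n-1$. Let $p$ be any permutation of length $n$. Then one of $p$ and $c_i(p)$ has exactly one more alternating run than the other; that is, $|\mathrm{run}(p)-\mathrm{run}(c_i(p))|=1$.
   Context: For a permutation $p=p_1p_2\cdots p_n$ and an index $i\in[2,n-1]$, $p$ changes direction at $i$ if $p_{i-1}<p_i>p_{i+1}$ or $p_{i-1}>p_i<p_{i+1}$. The permutation $p$ has $k$ alternating runs (written $\mathrm{run}(p)=k$) if $p$ changes direction exactly $k-1$ times. For a string $s$ of distinct integers with underlying set $S$, the complement of $s$ relative to $S$ is the string obtained from $s$ by replacing, for each $j$, the $j$th smallest element of $S$ by the $j$th largest element of $S$. For $1\leq i\leq n$, $c_i$ is the map on permutations of length $n$ that leaves $p_1\cdots p_{i-1}$ unchanged and replaces the string $p_ip_{i+1}\cdots p_n$ by its complement relative to its underlying set $\{p_i,\dots,p_n\}$. *)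

(* Defs.v *)
From mathcomp Require Import all_boot all_order all_fingroup.
Set Implicit Arguments. Unset Strict Implicit. Unset Printing Implicit Defensive.

(* A permutation of length n is p : 'S_n; its one-line notation is the
   word p(0) p(1) ... p(n-1) (values in {0..n-1}; shifting values by 1
   does not affect runs or complements). Positions are 0-based here. *)
Definition word (n : nat) (p : 'S_n) : seq nat := [seq val (p j) | j <- enum 'I_n].

Definition changes_dir (s : seq nat) (j : nat) : bool :=
  let a := nth 0 s j.-1 in let b := nth 0 s j in let c := nth 0 s j.+1 in
  ((a < b) && (b > c)) || ((a > b) && (b < c)).

Definition run (s : seq nat) : nat :=
  (count (changes_dir s) (iota 1 (size s).-2)).+1.

(* complement of a word of distinct integers relative to its underlying set:
   the j-th smallest element is replaced by the j-th largest *)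
Definition complement (s : seq nat) : seq nat :=
  let srt := sort leq s in
  [seq nth 0 srt ((size srt).-1 - index x srt) | x <- s].

(* c_i (1-based i): keep p_1..p_{i-1}, complement p_i..p_n *)
Definition c_map (i : nat) (s : seq nat) : seq nat :=
  take i.-1 s ++ complement (drop i.-1 s).

(* Main.v *)
Require Import Defs.
From mathcomp Require Import all_boot all_order all_fingroup zify.

Lemma nth_lt_sorted t a b : sorted ltn t -> a < size t -> b < size t ->
  (nth 0 t a < nth 0 t b) = (a < b).
Proof.
move=> st ha hb; case: (ltngtP a b) => h.
- by apply: (sorted_ltn_nth ltn_trans) => //.
- apply/negbTE; rewrite -leqNgt ltnW //.
  by apply: (sorted_ltn_nth ltn_trans) => //.
- by rewrite h ltnn.
Qed.

Definition cf (s : seq nat) (x : nat) :=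
  let srt := sort leq s in nth 0 srt ((size srt).-1 - index x srt).

Lemma complementE s : complement s = map (cf s) s.
Proof. by []. Qed.

Lemma cf_rev s x y : uniq s -> x \in s -> y \in s -> (cf s x < cf s y) = (y < x).
Proof.
move=> us xs ys; rewrite /cf.
set t := sort leq s.
have st : sorted ltn t by rewrite ltn_sorted_uniq_leq sort_uniq us sort_sorted //; exact: leq_total.
have xt : x \in t by rewrite mem_sort.
have yt : y \in t by rewrite mem_sort.
have ix : index x t < size t by rewrite index_mem.
have iy : index y t < size t by rewrite index_mem.
rewrite nth_lt_sorted //; try lia.
rewrite -{2}(nth_index 0 xt) -{2}(nth_index 0 yt) nth_lt_sorted //; lia.
Qed.

Lemma cf_mem s x : x \in s -> cf s x \in s.
Proof.
move=> xs; rewrite /cf -(mem_sort leq); apply: mem_nth.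
have : 0 < size (sort leq s).
  by move: xs; rewrite -(mem_sort leq); case: (sort leq s).
move=> h; rewrite /=; lia.
Qed.

Lemma cf_inj s : uniq s -> {in s &, injective (cf s)}.
Proof.
move=> us x y xs ys e; case: (ltngtP x y) => // h.
- by move: (cf_rev s y x us ys xs); rewrite e ltnn h.
- by move: (cf_rev s x y us xs ys); rewrite e ltnn h.
Qed.

Definition A (s : seq nat) j := nth 0 s j < nth 0 s j.+1.
Definition C (L : nat -> bool) N := count (fun j => L j.-1 != L j) (iota 1 N).

Lemma abstract_count (L L' : nat -> bool) k N :
  2 <= k -> k <= N ->
  (forall j, j.+2 <= k -> L' j = L j) ->
  (forall j, k <= j -> j <= N -> L' j = ~~ L j) ->
  C L N = (C L' N).+1 \/ C L' N = (C L N).+1.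
Proof.
move=> k2 kN H1 H2.
have eN : N = (k - 2) + (2 + (N - k)) by lia.
rewrite /C eN iotaD iotaD !count_cat.
have -> : 1 + (k - 2) = k.-1 by lia.
have -> : k.-1 + 2 = k.+1 by lia.
have E1 : count (fun j => L' j.-1 != L' j) (iota 1 (k - 2)) =
          count (fun j => L j.-1 != L j) (iota 1 (k - 2)).
  apply: eq_in_count => j; rewrite mem_iota => /andP[a b].
  by rewrite !H1 //; lia.
have E3 : count (fun j => L' j.-1 != L' j) (iota k.+1 (N - k)) =
          count (fun j => L j.-1 != L j) (iota k.+1 (N - k)).
  apply: eq_in_count => j; rewrite mem_iota => /andP[a b].
  have -> : L' j.-1 = ~~ L j.-1 by apply: H2; lia.
  have -> : L' j = ~~ L j by apply: H2; lia.
  by case: (L j.-1); case: (L j).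
rewrite E1 E3 /=.
have -> : k.-1.-1 = k - 2 by lia.
have -> : k.-1.+1 = k by lia.
rewrite (H1 (k-2)); last lia.
rewrite (H2 k) //.
case: (L (k-2)); case: (L k.-1); case: (L' k.-1); case: (L k) => /=; lia.
Qed.

Lemma run_xor (s : seq nat) : uniq s -> run s = (C (A s) (size s).-2).+1.
Proof.
move=> us; rewrite /run /C; congr _.+1; apply: eq_in_count => j.
rewrite mem_iota => /andP[j1 j2].
change nat in j.
have d1 : nth 0 s j.-1 != nth 0 s j.
  rewrite nth_uniq //; last (by change (j < @size nat s); lia); last (by change (j.-1 < @size nat s); lia).
  by rewrite neq_ltn; apply/orP; left; lia.
have d2 : nth 0 s j != nth 0 s j.+1.
  rewrite nth_uniq //; last (by change (j.+1 < @size nat s); lia); last (by change (j < @size nat s); lia).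
  by rewrite neq_ltn; apply/orP; left; lia.
rewrite /changes_dir /A /=.
have -> : j.-1.+1 = j by lia.
move: d1 d2; set a := nth 0 s j.-1; set b := nth 0 s j; set c := nth 0 s j.+1.
by case: (ltngtP a b); case: (ltngtP b c).
Qed.

Theorem mainTheorem1 (n : nat) (p : 'S_n) (i : nat) :
  4 <= n -> 3 <= i <= n - 1 ->
  run (word p) = (run (c_map i (word p))).+1 \/
  run (c_map i (word p)) = (run (word p)).+1.
Proof.
move=> n4 /andP[i3 i4].
set w := word p.
have sw : size w = n by rewrite /w /word size_map size_enum_ord.
have uw : uniq w.
  rewrite /w /word map_inj_uniq ?enum_uniq // => x y /val_inj; exact: perm_inj.
set k := i.-1.
set d := drop k w.
have ud : uniq d by rewrite drop_uniq.
have sd : size d = n - k by rewrite size_drop sw.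
have w'E : c_map i w = take k w ++ map (cf d) d by [].
have sw' : size (c_map i w) = n by rewrite w'E size_cat size_map size_takel ?sd; lia.
have n1 : forall j, j < k -> nth 0 (c_map i w) j = nth 0 w j.
  by move=> j jk; rewrite w'E nth_cat size_takel ?jk ?nth_take //; lia.
have wd : forall j, k <= j < n -> nth 0 w j \in d.
  move=> j /andP[h1 h2]; have -> : nth 0 w j = nth 0 d (j - k) by rewrite nth_drop; congr nth; lia.
  by apply: mem_nth; rewrite sd; lia.
have n2 : forall j, k <= j < n -> nth 0 (c_map i w) j = cf d (nth 0 w j).
  move=> j /andP[h1 h2]; rewrite w'E nth_cat size_takel; last lia.
  rewrite ltnNge h1 /= (nth_map 0); last by rewrite sd; lia.
  by rewrite nth_drop; congr (cf d (nth 0 w _)); lia.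
have uw' : uniq (c_map i w).
  rewrite w'E cat_uniq take_uniq // map_inj_in_uniq ?ud; last exact: cf_inj.
  rewrite andbT; apply/hasPn => y /mapP[x xd ->].
  have yd := cf_mem d x xd.
  have : uniq (take k w ++ drop k w) by rewrite cat_take_drop.
  rewrite cat_uniq => /and3P[_ /hasPn H _].
  exact: H.
rewrite (run_xor w uw) (run_xor (c_map i w) uw') sw sw'.
suff key : C (A w) n.-2 = (C (A (c_map i w)) n.-2).+1 \/ C (A (c_map i w)) n.-2 = (C (A w) n.-2).+1.
  by case: key => ->; [left|right].
apply: (abstract_count (A w) (A (c_map i w)) k); try lia.
- move=> j jk; rewrite /A !n1 //; lia.
- move=> j h1 h2; rewrite /A !n2; try lia.
  rewrite cf_rev ?wd //; try lia.
  have : nth 0 w j != nth 0 w j.+1 by rewrite nth_uniq ?sw //; lia.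
  by case: ltngtP.
Qed.
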